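(* Let $S$ be a finite set. The comma category $(k\pi_2\downarrow *_S)$ is equivalent to the category $\mathrm{RI}_S$ whose objects are connected ribbon graphs with set of outer flags equal to $S$, and whose morphisms are graph morphisms which are composites of isomorphisms of ribbon graphs and contractions of non-loop edges (with the induced ribbon structure), and whose flag map restricts to the identity on $S$.
   Context: A graph $\Gamma=(F,V,\partial,\imath)$ consists of finite sets $F$ (flags) and $V$ (vertices), $\partial:F\to V$ and an involution $\imath$ of $F$; 2-element orbits of $\imath$ are edges, fixed points are outer flags; $F_v=\partial^{-1}(v)$. Graph morphisms $\phi:\Gamma\to\Gamma'$ are triples $(\phi_V,\phi^F,\imath_\phi)$ with $\phi_V$ a surjection on vertices, $\phi^F:F'\to F$ an injection on flags, $\imath_\phi$ a fixed-point-free involution on flags not in the image (pairing contracted edges or pairs of outer flags), compatible with incidences and preserving non-contracted edges. A cyclic order on a finite set $U$ is a permutation of $U$ with a single orbit (the empty permutation if $U=\emptyset$). A ribbon graph is a graph with a cyclic order $\sigma_v$ on each $F_v$. For a permutation $\rho$ of $U$ and distinct $a,b\in U$, $\rho\langle ab\rangle$ denotes the permutation of $U\setminus\{a,b\}$ given by the first-return map of $\rho\tau_{ab}$: $x\mapsto(\rho\tau_{ab})^m(x)$, $m\ge1$ minimal with result not in $\{a,b\}$. Contracting a non-loop edge $\{s,t\}$ of a ribbon graph gives the merged vertex the cyclic order $(\sigma_{\partial s}\sqcup\sigma_{\partial t})\langle st\rangle$; isomorphisms of ribbon graphs are graph isomorphisms transporting the cyclic orders. Aggregates are graphs with $\imath=\mathrm{id}$;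 $*_S$ is the one-vertex aggregate with flags $S$. $\mathrm{Agg}^{\rm ctd}$: aggregates with morphisms generated by isomorphisms, virtual edge contractions ${}_s\circ_t$ (outer flags $s,t$ at distinct vertices; merge the vertices, delete $s,t$) and virtual loop contractions $\circ_{st}$ ($s,t$ at one vertex; delete them); $\mathrm{Agg}^{\rm forest}$: generated by isomorphisms and virtual edge contractions. $\mathcal O_{\rm cycass}:\mathrm{Agg}^{\rm forest}\to\mathrm{Set}$ assigns to $X$ the set of families of cyclic orders on all $F_v$; isomorphisms transport by conjugation, and ${}_s\circ_t$ gives the merged vertex $(\sigma_{\partial s}\sqcup\sigma_{\partial t})\langle st\rangle$. The comma category $(k\pi_2\downarrow *_S)$ has objects triples $(X,o,\phi)$ with $X$ an aggregate, $o\in\mathcal O_{\rm cycass}(X)$, $\phi:X\to *_S$ in $\mathrm{Agg}^{\rm ctd}$; morphisms $(X,o,\phi)\to(X',o',\phi')$ are $\psi:X\to X'$ in $\mathrm{Agg}^{\rm forest}$ with $\mathcal O_{\rm cycass}(\psi)(o)=o'$ and $\phi'\psi=\phi$. *)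

(* Defs.v *)
From HB Require Import structures.
From mathcomp Require Import all_boot.

Set Implicit Arguments.
Unset Strict Implicit.
Unset Printing Implicit Defensive.

(* Categories presented by a type of raw arrows, a predicate selecting  *)
(* the actual morphisms, the equality of morphisms, identities and      *)
(* (diagrammatic) composition:  cmp f g  is  "g after f".               *)
Record pcat := PCat {
  ob : Type;
  arr : ob -> ob -> Type;
  ishom : forall a b, arr a b -> Prop;
  heq : forall a b, arr a b -> arr a b -> Prop;
  idm : forall a, arr a a;
  cmp : forall a b c, arr a b -> arr b c -> arr a c }.
Arguments ob p : clear implicits.
Arguments arr p a b : clear implicits.
Arguments ishom {p a b}.
Arguments heq {p a b}.
Arguments idm p a : clear implicits.
Arguments cmp {p a b c}.

Record functor (C D : pcat) := Functor {
  fo : ob C -> ob D;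
  fm : forall a b, arr C a b -> arr D (fo a) (fo b) }.
Arguments fo {C D}.
Arguments fm {C D} f {a b} : rename.

Definition is_functor C D (F : functor C D) : Prop :=
  [/\ forall a b (f : arr C a b), ishom f -> ishom (fm F f),
      forall a b (f g : arr C a b), ishom f -> ishom g -> heq f g ->
        heq (fm F f) (fm F g),
      forall a, heq (fm F (idm C a)) (idm D (fo F a)) &
      forall a b c (f : arr C a b) (g : arr C b c), ishom f -> ishom g ->
        heq (fm F (cmp f g)) (cmp (fm F f) (fm F g))].

Definition fid C : functor C C := @Functor C C (fun a => a) (fun a b f => f).
Definition fcomp C D E (F : functor C D) (G : functor D E) : functor C E :=
  @Functor C E (fun a => fo G (fo F a)) (fun a b f => fm G (fm F f)).

Definition natiso C D (F G : functor C D) : Prop :=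
  exists (eta : forall a, arr D (fo F a) (fo G a))
         (eti : forall a, arr D (fo G a) (fo F a)),
  [/\ forall a, ishom (eta a) /\ ishom (eti a),
      forall a, heq (cmp (eta a) (eti a)) (idm D (fo F a)) /\
                heq (cmp (eti a) (eta a)) (idm D (fo G a)) &
      forall a b (f : arr C a b), ishom f ->
        heq (cmp (fm F f) (eta b)) (cmp (eta a) (fm G f))].

Definition cat_equiv (C D : pcat) : Prop :=
  exists (F : functor C D) (G : functor D C),
  [/\ is_functor F, is_functor G, natiso (fid C) (fcomp F G) &
      natiso (fcomp G F) (fid D)].

Record graph := Graph {
  gF : finType; gV : finType; gbd : gF -> gV; ginv : gF -> gF }.
Arguments gF g : clear implicits.
Arguments gV g : clear implicits.
Arguments gbd g _ : clear implicits.
Arguments ginv g _ : clear implicits.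

Definition is_graph (G : graph) : Prop := forall a, ginv G (ginv G a) = a.

Definition is_agg (G : graph) : Prop := forall a, ginv G a = a.

(* Graph morphisms G -> H : (phi_V, phi^F, i_phi).  i_phi is only
   meaningful on flags outside the image of phi^F. *)
Record gmor (G H : graph) := GMor {
  mV : gV G -> gV H; mF : gF H -> gF G; mI : gF G -> gF G }.

Definition inimg G H (f : gmor G H) (a : gF G) : bool := [exists b, mF f b == a].

Definition is_gmor G H (f : gmor G H) : Prop :=
  [/\ (forall w, exists v, mV f v = w),
      injective (mF f),
      (forall b, mV f (gbd G (mF f b)) = gbd H b),
      (forall b, mF f (ginv H b) = ginv G (mF f b)) &
      (forall a, ~~ inimg f a ->
         [/\ ~~ inimg f (mI f a), mI f a <> a, mI f (mI f a) = a,
             (ginv G a <> a -> mI f a = ginv G a) &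
             mV f (gbd G a) = mV f (gbd G (mI f a))])].

Definition gid G : gmor G G := @GMor G G (fun v => v) (fun a => a) (fun a => a).

Definition gcomp G1 G2 G3 (f : gmor G1 G2) (g : gmor G2 G3) : gmor G1 G3 :=
  @GMor G1 G3 (fun v => mV g (mV f v)) (fun c => mF f (mF g c))
    (fun a => if [pick b | mF f b == a] is Some b then mF f (mI g b)
              else mI f a).

Definition geq G H (f g : gmor G H) : Prop :=
  [/\ forall v, mV f v = mV g v, forall b, mF f b = mF g b &
      forall a, ~~ inimg f a -> mI f a = mI g a].

Definition is_giso G H (f : gmor G H) : Prop :=
  [/\ is_gmor f, bijective (mV f) & bijective (mF f)].

(* contraction of the pair {s,t}: the flags s,t are deleted and paired by
   i_phi; if merge, the distinct vertices of s and t are merged (edge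
   contraction), otherwise s,t sit at one vertex and no vertices are
   identified (loop contraction). *)
Definition is_pair_contr G H (f : gmor G H) (s t : gF G) (merge : bool) : Prop :=
  [/\ is_gmor f, s != t,
      (forall a, inimg f a = (a != s) && (a != t)),
      mI f s = t &
      (if merge then
         gbd G s != gbd G t /\
         (forall v w, mV f v = mV f w <->
            [\/ v = w, v = gbd G s /\ w = gbd G t | v = gbd G t /\ w = gbd G s])
       else gbd G s = gbd G t /\ injective (mV f))].

(* Cyclic orders on all F_v, packaged as one permutation of F that      *)
(* preserves each F_v and has a single orbit on each F_v.               *)
Definition is_cycord (G : graph) (o : gF G -> gF G) : Prop :=
  [/\ injective o, (forall a, gbd G (o a) = gbd G a) &
      (forall a b, gbd G a = gbd G b -> exists n, iter n o a = b)].

Definition tau (T : eqType) (a b x : T) : T :=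
  if x == a then b else if x == b then a else x.

(* y = rho<ab>(x): first return of rho tau_ab (tau applied first) *)
Definition first_return (T : eqType) (rho : T -> T) (a b x y : T) : Prop :=
  exists m, [/\ (0 < m)%N, iter m (fun z => rho (tau a b z)) x = y,
                y \notin [:: a; b] &
                forall k, (0 < k < m)%N ->
                  iter k (fun z => rho (tau a b z)) x \in [:: a; b]].

Definition iso_transport G H (f : gmor G H) (o : gF G -> gF G) (o' : gF H -> gF H) :=
  forall b, mF f (o' b) = o (mF f b).

Definition contr_transport G H (f : gmor G H) (s t : gF G)
    (o : gF G -> gF G) (o' : gF H -> gF H) :=
  forall b, first_return o s t (mF f b) (mF f (o' b)).

Inductive gclosure (Gen : forall G H : graph, gmor G H -> Prop) :
    forall G H, gmor G H -> Prop :=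
| gcl_gen G H (f : gmor G H) : Gen G H f -> gclosure Gen f
| gcl_step G1 G2 G3 (f : gmor G1 G2) (g : gmor G2 G3) :
    Gen G1 G2 f -> gclosure Gen g -> gclosure Gen (gcomp f g)
| gcl_ext G H (f f' : gmor G H) : gclosure Gen f -> geq f f' -> gclosure Gen f'.

Inductive oclosure
    (Gen : forall G H : graph, gmor G H -> (gF G -> gF G) -> (gF H -> gF H) -> Prop) :
    forall G H, gmor G H -> (gF G -> gF G) -> (gF H -> gF H) -> Prop :=
| ocl_gen G H (f : gmor G H) o o' : Gen G H f o o' -> oclosure Gen f o o'
| ocl_step G1 G2 G3 (f : gmor G1 G2) (g : gmor G2 G3) o1 o2 o3 :
    Gen G1 G2 f o1 o2 -> oclosure Gen g o2 o3 -> oclosure Gen (gcomp f g) o1 o3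
| ocl_ext G H (f f' : gmor G H) o o' :
    oclosure Gen f o o' -> geq f f' -> oclosure Gen f' o o'.

Definition ctd_gen G H (f : gmor G H) : Prop :=
  [/\ is_agg G, is_agg H &
      is_giso f \/ exists s t merge, is_pair_contr f s t merge].

(* Agg^forest generators together with the action of O_cycass *)
Definition forest_gen G H (f : gmor G H) (o : gF G -> gF G) (o' : gF H -> gF H) : Prop :=
  [/\ is_agg G, is_agg H, is_cycord o, is_cycord o' &
      (is_giso f /\ iso_transport f o o') \/
      (exists s t, is_pair_contr f s t true /\ contr_transport f s t o o')].

Definition ribbon_gen G H (f : gmor G H) (o : gF G -> gF G) (o' : gF H -> gF H) : Prop :=
  [/\ is_graph G, is_graph H, is_cycord o, is_cycord o' &
      (is_giso f /\ iso_transport f o o') \/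
      (exists s t, [/\ ginv G s = t, is_pair_contr f s t true &
                       contr_transport f s t o o'])].

Definition star (S : finType) : graph :=
  @Graph S unit (fun _ => tt) (fun a => a).

Record comma_ob (S : finType) := CommaOb {
  cX : graph;
  co : gF cX -> gF cX;
  cphi : gmor cX (star S);
  cX_agg : is_agg cX;
  co_cyc : is_cycord co;
  cphi_ctd : gclosure ctd_gen cphi }.
Arguments co {S} c _.

Definition comma_cat (S : finType) : pcat :=
  @PCat (comma_ob S) (fun a b => gmor (cX a) (cX b))
    (fun a b psi => oclosure forest_gen psi (co a) (co b) /\
                    geq (gcomp psi (cphi b)) (cphi a))
    (fun a b f g => geq f g)
    (fun a => gid (cX a))
    (fun a b c f g => gcomp f g).

Definition adj (G : graph) : rel (gV G) := fun v w =>
  [exists a, [&& ginv G a != a, gbd G a == v & gbd G (ginv G a) == w]].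
Arguments adj G : clear implicits.

Definition connected (G : graph) : Prop :=
  (0 < #|gV G|)%N /\ forall v w, connect (adj G) v w.

Record rdata (S : finType) := RData {
  rE : finType; rV : finType;
  rbd : (S + rE)%type -> rV;
  rinv : (S + rE)%type -> (S + rE)%type;
  rsig : (S + rE)%type -> (S + rE)%type }.
Arguments rbd {S} r _.
Arguments rinv {S} r _.
Arguments rsig {S} r _.

Definition rgraph S (r : rdata S) : graph := @Graph (S + rE r)%type (rV r) (rbd r) (rinv r).

Definition ri_valid S (r : rdata S) : Prop :=
  [/\ is_graph (rgraph r), @is_cycord (rgraph r) (rsig r), connected (rgraph r) &
      (* the outer flags are exactly S *)
      forall x, rinv r x = x <-> exists s, x = inl s].

Definition ri_ob (S : finType) := { r : rdata S | ri_valid r }.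

Definition RI_cat (S : finType) : pcat :=
  @PCat (ri_ob S) (fun a b => gmor (rgraph (sval a)) (rgraph (sval b)))
    (fun a b psi =>
       oclosure ribbon_gen psi (rsig (sval a)) (rsig (sval b)) /\
       forall s : S, mF psi (inl s) = inl s)
    (fun a b f g => geq f g)
    (fun a => gid (rgraph (sval a)))
    (fun a b c f g => gcomp f g).

(* Main.v *)
From HB Require Import structures.
From mathcomp Require Import all_boot.
Require Import Defs.
Set Implicit Arguments.
Unset Strict Implicit.
Unset Printing Implicit Defensive.


Lemma inimgP G H (f : gmor G H) a : reflect (exists b, mF f b = a) (inimg f a).
Proof.
apply: (iffP existsP) => [[b /eqP <-]|[b <-]]; by exists b.
Qed.

Lemma inimg_mF G H (f : gmor G H) b : inimg f (mF f b).
Proof. by apply/inimgP; exists b. Qed.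

Lemma gcomp_mI_in G1 G2 G3 (f : gmor G1 G2) (g : gmor G2 G3) b :
  injective (mF f) -> mI (gcomp f g) (mF f b) = mF f (mI g b).
Proof.
move=> inj; rewrite /=; case: pickP => [b' /eqP H | H].
  by rewrite (inj _ _ H).
by move: (H b); rewrite eqxx.
Qed.

Lemma gcomp_mI_out G1 G2 G3 (f : gmor G1 G2) (g : gmor G2 G3) a :
  ~~ inimg f a -> mI (gcomp f g) a = mI f a.
Proof.
move=> na; rewrite /=; case: pickP => [b /eqP H | //].
by move: na; rewrite -H inimg_mF.
Qed.

Lemma inimg_gcomp G1 G2 G3 (f : gmor G1 G2) (g : gmor G2 G3) a :
  inimg (gcomp f g) a = [exists c, mF f (mF g c) == a].
Proof. by []. Qed.

Lemma inimg_gcompP G1 G2 G3 (f : gmor G1 G2) (g : gmor G2 G3) a :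
  injective (mF f) ->
  inimg (gcomp f g) a = (inimg f a && [exists b, (mF f b == a) && inimg g b]).
Proof.
move=> inj; apply/idP/idP.
  case/inimgP => c <- /=; rewrite inimg_mF /=; apply/existsP; exists (mF g c).
  by rewrite eqxx inimg_mF.
case/andP=> _ /existsP [b /andP [/eqP <- /inimgP [c <-]]].
by apply/inimgP; exists c.
Qed.

Lemma gcomp_gmor G1 G2 G3 (f : gmor G1 G2) (g : gmor G2 G3) :
  is_gmor f -> is_gmor g -> is_gmor (gcomp f g).
Proof.
case=> sf inf incf edf nif; case=> sg ing incg edg nig; split.
- move=> w; have [u <-] := sg w; have [v <-] := sf u; by exists v.
- by move=> x y /= /inf /ing.
- by move=> c /=; rewrite incf incg.
- by move=> c /=; rewrite edg edf.
move=> a na.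
case: (boolP (inimg f a)) => ia.
  case/inimgP: ia => b eb; subst a.
  have nb : ~~ inimg g b.
    apply: contra na => /inimgP [c <-]; by apply/inimgP; exists c.
  have [ni1 ni2 ni3 ni4 ni5] := nig b nb.
  rewrite !gcomp_mI_in // ni3; split => //.
  - apply: contra ni1 => /inimgP [c /= /inf e]; apply/inimgP; by exists c.
  - by move/inf.
  - move=> h; rewrite -edf in h *; rewrite ni4 // => e; apply: h; by rewrite e.
  - by rewrite /= !incf.
have [ni1 ni2 ni3 ni4 ni5] := nif a ia.
rewrite !gcomp_mI_out // ni3; split => //.
- apply: contra ni1 => /inimgP [c /= <-]; exact: inimg_mF.
- by rewrite /= ni5.
Qed.

Lemma geq_refl G H (f : gmor G H) : geq f f.
Proof. by split. Qed.

Lemma inimg_geq G H (f g : gmor G H) a : geq f g -> inimg f a = inimg g a.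
Proof.
case=> _ eF _; apply/idP/idP => /inimgP [b <-]; apply/inimgP; exists b => //.
Qed.

Lemma geq_sym G H (f g : gmor G H) : geq f g -> geq g f.
Proof.
move=> e; case: (e) => eV eF eI; split=> // a na; rewrite eI //.
by rewrite (inimg_geq a e).
Qed.

Lemma geq_trans G H (f g h : gmor G H) : geq f g -> geq g h -> geq f h.
Proof.
move=> e1 e2; case: (e1) => eV eF eI; case: (e2) => eV' eF' eI'; split.
- by move=> v; rewrite eV eV'.
- by move=> b; rewrite eF eF'.
- move=> a na; rewrite eI // eI' //; by rewrite -(inimg_geq a e1).
Qed.

Lemma geq_gmor G H (f g : gmor G H) : geq f g -> is_gmor f -> is_gmor g.
Proof.
move=> e; case: (e) => eV eF eI [sf inf incf edf nif]; split.
- move=> w; have [v <-] := sf w; exists v; by rewrite eV.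
- by move=> x y; rewrite -!eF => /inf.
- by move=> b; rewrite -eV -eF.
- by move=> b; rewrite -!eF.
move=> a; rewrite -(inimg_geq a e) => na.
have [n1 n2 n3 n4 n5] := nif a na.
have e1 := esym (eI a na).
have e2 := esym (eI _ n1).
rewrite e1 e2; split => //; first by rewrite -(inimg_geq (mI f a) e).
by rewrite -!eV.
Qed.

Lemma gcomp_assoc G1 G2 G3 G4 (f : gmor G1 G2) (g : gmor G2 G3) (h : gmor G3 G4) :
  injective (mF f) -> injective (mF g) ->
  geq (gcomp (gcomp f g) h) (gcomp f (gcomp g h)).
Proof.
move=> inf ing; have infg : injective (mF (gcomp f g)) by move=> x y /inf /ing.
split => // a _.
case: (boolP (inimg f a)) => [/inimgP [b <-] | na].
  rewrite [RHS]gcomp_mI_in //.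
  case: (boolP (inimg g b)) => [/inimgP [c <-] | nb].
    rewrite gcomp_mI_in // (_ : mF f (mF g c) = mF (gcomp f g) c) //.
    by rewrite gcomp_mI_in.
  rewrite (gcomp_mI_out (f := gcomp f g)); last first.
    apply: contra nb => /inimgP [c /= /inf <-]; exact: inimg_mF.
  by rewrite gcomp_mI_in // gcomp_mI_out.
rewrite gcomp_mI_out; last first.
  apply: contra na => /inimgP [c /= <-]; exact: inimg_mF.
by rewrite !gcomp_mI_out.
Qed.

Lemma geq_comp_l G1 G2 G3 (f f' : gmor G1 G2) (g : gmor G2 G3) :
  injective (mF f) -> geq f f' -> geq (gcomp f g) (gcomp f' g).
Proof.
move=> inf e; case: (e) => eV eF eI; split.
- by move=> v /=; rewrite eV.
- by move=> c /=; rewrite eF.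
have inf' : injective (mF f') by move=> x y; rewrite -!eF => /inf.
move=> a _; case: (boolP (inimg f a)) => [/inimgP [b <-] | na].
  by rewrite gcomp_mI_in // (eF b) gcomp_mI_in // eF.
rewrite !gcomp_mI_out ?eI //; by rewrite -(inimg_geq a e).
Qed.

Lemma geq_comp_r G1 G2 G3 (f : gmor G1 G2) (g g' : gmor G2 G3) :
  injective (mF f) -> geq g g' -> geq (gcomp f g) (gcomp f g').
Proof.
move=> inf e; case: (e) => eV eF eI; split.
- by move=> v /=; rewrite eV.
- by move=> c /=; rewrite eF.
move=> a; rewrite inimg_gcompP // negb_and.
case: (boolP (inimg f a)) => [/inimgP [b <-] | na].
  case/orP => [//|h]; rewrite !gcomp_mI_in // eI //.
  apply: contra h => ib; apply/existsP; exists b; by rewrite eqxx.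
by rewrite !gcomp_mI_out.
Qed.

Definition AdjP G H (f : gmor G H) : rel (gV G) := fun v w =>
  [exists a, [&& ~~ inimg f a, gbd G a == v & gbd G (mI f a) == w]].

Definition FC G H (f : gmor G H) :=
  forall v w, mV f v = mV f w -> connect (AdjP f) v w.

Lemma gen_gmor G H (f : gmor G H) :
  is_giso f \/ (exists s t merge, is_pair_contr f s t merge) -> is_gmor f.
Proof. by case=> [[]|[s [t [m []]]]]. Qed.

Lemma gen_FC G H (f : gmor G H) :
  is_giso f \/ (exists s t merge, is_pair_contr f s t merge) -> FC f.
Proof.
case=> [[_ [g gK _] _]|[s [t [m [gm st ii ms hm]]]]] v w e.
  by rewrite -(gK v) e gK connect0.
have ns : ~~ inimg f s by rewrite ii eqxx.
have nt : ~~ inimg f t by rewrite ii eqxx andbF.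
case: gm => _ _ _ _ nif.
have [_ _ mt _ _] := nif s ns; rewrite ms in mt.
case: m hm => [[_ /(_ v w) [/(_ e) h _]]|[_ inj]]; last by rewrite (inj _ _ e) connect0.
case: h => [->|[-> ->]|[-> ->]]; first exact: connect0.
  apply: connect1; apply/existsP; exists s; by rewrite ns eqxx ms eqxx.
apply: connect1; apply/existsP; exists t; by rewrite nt eqxx mt eqxx.
Qed.

Lemma AdjP_comp_sub G1 G2 G3 (f : gmor G1 G2) (g : gmor G2 G3) v w :
  AdjP f v w -> AdjP (gcomp f g) v w.
Proof.
case/existsP => a /and3P [na e1 e2]; apply/existsP; exists a.
have na' : ~~ inimg (gcomp f g) a.
  apply: contra na => /inimgP [c <-]; exact: inimg_mF.
by rewrite na' e1 gcomp_mI_out.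
Qed.

Lemma AdjP_lift G1 G2 G3 (f : gmor G1 G2) (g : gmor G2 G3) x y :
  is_gmor f -> AdjP g x y ->
  exists v w, [/\ mV f v = x, mV f w = y & AdjP (gcomp f g) v w].
Proof.
case=> _ inf incf _ _ /existsP [c /and3P [nc /eqP e1 /eqP e2]].
exists (gbd G1 (mF f c)), (gbd G1 (mF f (mI g c))); split.
- by rewrite incf.
- by rewrite incf.
apply/existsP; exists (mF f c); rewrite gcomp_mI_in // !eqxx !andbT.
apply: contra nc => /inimgP [d /= /inf <-]; exact: inimg_mF.
Qed.

Lemma FC_comp G1 G2 G3 (f : gmor G1 G2) (g : gmor G2 G3) :
  is_gmor f -> FC f -> FC g -> FC (gcomp f g).
Proof.
move=> gf ff fg v w e.
have: connect (AdjP g) (mV f v) (mV f w) by apply: fg.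
have sub : forall v w, mV f v = mV f w -> connect (AdjP (gcomp f g)) v w.
  move=> v1 w1 e1; apply: (connect_sub _ (ff _ _ e1)) => x y h.
  by apply: connect1; apply: AdjP_comp_sub.
suff key : forall x y, connect (AdjP g) x y -> forall v w,
    mV f v = x -> mV f w = y -> connect (AdjP (gcomp f g)) v w.
  by move=> c; apply: (key _ _ c).
move=> x y /connectP [p pth ly]; elim: p x pth ly => [|z p IH] x /=.
  by move=> _ -> v1 w1 e1 e2; apply: sub; rewrite e1 e2.
case/andP => a pth ly v1 w1 ex ey.
have [v' [w' [e1 e2 h]]] := AdjP_lift gf a.
apply: connect_trans (sub _ _ (etrans ex (esym e1))) _.
apply: connect_trans (connect1 h) _.
exact: (IH z pth ly w' w1 e2 ey).
Qed.

Lemma AdjP_geq G H (f f' : gmor G H) v w : geq f f' -> AdjP f v w = AdjP f' v w.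
Proof.
move=> e; case: (e) => _ _ eI.
apply/existsP/existsP => -[a /and3P [na e1 e2]]; exists a.
  by rewrite -(inimg_geq a e) na e1 -eI.
rewrite (inimg_geq a e) na e1 eI //; by rewrite (inimg_geq a e).
Qed.

Lemma FC_geq G H (f f' : gmor G H) : geq f f' -> FC f -> FC f'.
Proof.
move=> e; case: (e) => eV _ _ ff v w; rewrite -!eV => /ff.
by apply: connect_sub => x y h; apply: connect1; rewrite -(AdjP_geq _ _ e).
Qed.

Lemma closure_inv G H (f : gmor G H) : gclosure ctd_gen f -> is_gmor f /\ FC f.
Proof.
elim=> {G H f}.
- by move=> G H f [_ _ h]; split; [apply: gen_gmor | apply: gen_FC].
- move=> G1 G2 G3 f g [_ _ h] _ [gg fg].
  have gf := gen_gmor h; split; first exact: gcomp_gmor.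
  by apply: FC_comp => //; apply: gen_FC.
- move=> G H f f' _ [gf ff] e; split; [exact: geq_gmor gf | exact: FC_geq ff].
Qed.

Lemma unit_eq (x y : unit) : x = y. Proof. by case: x; case: y. Qed.

Lemma connect_homo (T T' : finType) (e : rel T) (e' : rel T') (h : T -> T') :
  (forall x y, e x y -> connect e' (h x) (h y)) ->
  forall x y, connect e x y -> connect e' (h x) (h y).
Proof.
move=> H x y /connectP [p pth ->]; elim: p x pth => [|z p IH] x /=.
  by move=> _; exact: connect0.
case/andP => exz pth; exact: connect_trans (H _ _ exz) (IH _ pth).
Qed.

Section Contr.
Variables (S : finType) (Y : graph) (psi : gmor Y (star S)) (a : gF Y).
Hypothesis Hagg : is_agg Y.
Hypothesis inj : injective (mF psi).
Hypothesis H2 : forall x, ~~ inimg psi x ->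
  [/\ ~~ inimg psi (mI psi x), mI psi x <> x & mI psi (mI psi x) = x].
Hypothesis na : ~~ inimg psi a.

Local Notation b := (mI psi a).

Lemma nb : ~~ inimg psi b. Proof. by case: (H2 na). Qed.
Lemma ba : b != a. Proof. by case: (H2 na) => _ /eqP. Qed.
Lemma bb : mI psi b = a. Proof. by case: (H2 na). Qed.

Definition mrg := gbd Y a != gbd Y b.
Definition Vp := {v : gV Y | ~~ mrg || (v != gbd Y b)}.

Lemma projV_pf v :
  ~~ mrg || ((if mrg && (v == gbd Y b) then gbd Y a else v) != gbd Y b).
Proof.
rewrite /mrg; case: (eqVneq (gbd Y a) (gbd Y b)) => [//|ne] /=.
by case: ifP => // /negbT.
Qed.

Definition projV v : Vp := @exist _ (fun w => ~~ mrg || (w != gbd Y b)) _ (projV_pf v).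

Lemma projV_val (w : Vp) : projV (val w) = w.
Proof.
apply: val_inj => /=; case: w => w /= pw.
by move: pw; case: mrg => //= /negbTE ->.
Qed.

Lemma projV_ab : projV (gbd Y a) = projV (gbd Y b).
Proof.
apply: val_inj => /=; rewrite eqxx andbT.
rewrite /mrg; case: (eqVneq (gbd Y a) (gbd Y b)) => [->|ne] /=; by rewrite ?if_same.
Qed.

Definition Fp := {x : gF Y | (x != a) && (x != b)}.
Definition Yp := @Graph Fp Vp (fun x => projV (gbd Y (val x))) (fun x => x).
Definition fc : gmor Y Yp := @GMor Y Yp projV (fun x : Fp => val x) (tau a b).

Lemma mFp_pf s : (mF psi s != a) && (mF psi s != b).
Proof.
apply/andP; split; apply/eqP => e.
  by move: na; rewrite -e inimg_mF.
by move: nb; rewrite -e inimg_mF.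
Qed.

Definition mFp (s : S) : Fp := @exist _ (fun x => (x != a) && (x != b)) _ (mFp_pf s).
Definition psip : gmor Yp (star S) :=
  @GMor Yp (star S) (fun _ => tt) mFp (fun x => insubd x (mI psi (val x))).

Lemma inimg_fc c : inimg fc c = (c != a) && (c != b).
Proof.
apply/inimgP/idP => [[x <-]|h]; first exact: (valP x).
by exists ((@exist _ (fun x => (x != a) && (x != b)) c h : Fp)).
Qed.

Lemma inimg_psip x : inimg psip x = inimg psi (val x).
Proof.
apply/inimgP/inimgP => [[s <-]|[s e]]; first by exists s.
by exists s; apply: val_inj.
Qed.

Lemma mI_nonimg c : ~~ inimg psi c -> c != a -> c != b ->
  (mI psi c != a) && (mI psi c != b).
Proof.
move=> nc ca cb; case: (H2 nc) => _ _ cc.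
apply/andP; split; apply/eqP => e.
  by move/eqP: cb; apply; rewrite -e cc.
by move/eqP: ca; apply; rewrite -cc e bb.
Qed.

Lemma val_mIp x : ~~ inimg psip x -> val (mI psip x) = mI psi (val x).
Proof.
rewrite inimg_psip => nx; rewrite /= val_insubd.
by case: x nx => x /= /andP [xa xb] nx; rewrite mI_nonimg.
Qed.

Lemma fc_contr : is_pair_contr fc a (mI psi a) mrg.
Proof.
have ab : a != b by rewrite eq_sym ba.
have tauA : tau a b a = b by rewrite /tau eqxx.
have tauB : tau a b b = a by rewrite /tau eqxx (negbTE ba).
split.
- split.
  + by move=> w; exists (val w); apply: projV_val.
  + exact: val_inj.
  + by [].
  + by move=> x /=; rewrite Hagg.
  move=> c; rewrite inimg_fc negb_and !negbK.
  have tt1 : forall c, (c == a) || (c == b) -> (tau a b c == a) || (tau a b c == b).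
    by move=> c' /orP [/eqP ->|/eqP ->]; rewrite /tau ?eqxx /= ?(negbTE ba) ?eqxx ?orbT.
  move=> h.
  have h1 : ~~ inimg fc (mI fc c) by rewrite inimg_fc negb_and !negbK tt1.
  split.
  + by move: h1; rewrite /inimg negbK.
  + by case/orP: h => /eqP -> /=; rewrite ?tauA ?tauB => e; [move/eqP: ba | move/eqP: ab].
  + by case/orP: h => /eqP -> /=; rewrite ?tauA ?tauB.
  + by rewrite Hagg.
  + case/orP: h => /eqP -> /=; rewrite ?tauA ?tauB.
      exact: projV_ab.
    exact: esym projV_ab.
- by [].
- exact: inimg_fc.
- by rewrite /= /tau eqxx.
case: ifP => m.
  split => // v w; split.
    move/(congr1 val) => /=; rewrite m /=.
    case: (eqVneq v (gbd Y b)) => [->|vb]; case: (eqVneq w (gbd Y b)) => [->|wb] //=.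
    - by move=> _; apply: Or31.
    - by move=> <-; apply: Or33.
    - by move=> ->; apply: Or32.
    - by move=> ->; apply: Or31.
  case=> [->|[-> ->]|[-> ->]] //; [exact: projV_ab | exact: esym projV_ab].
split; first by move: m => /negbT; rewrite negbK => /eqP.
by move=> v w /(congr1 val) /=; rewrite m.
Qed.

Lemma fc_geq : geq (gcomp fc psip) psi.
Proof.
split.
- by move=> v; apply: unit_eq.
- by [].
move=> c nc.
case: (boolP (inimg fc c)) => [/inimgP [x ex]|nfc].
  subst c; rewrite gcomp_mI_in; last exact: val_inj.
  apply: val_mIp; apply: contra nc => /inimgP [s e]; apply/inimgP; exists s.
  by rewrite -e.
rewrite gcomp_mI_out //=; move: nfc; rewrite inimg_fc negb_and !negbK.
case/orP => /eqP ->; rewrite /tau eqxx //.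
by rewrite (negbTE ba) bb.
Qed.

Lemma psip_inj : injective (mF psip).
Proof. by move=> s t /(congr1 val) /= /inj. Qed.

Lemma psip_H2 x : ~~ inimg psip x ->
  [/\ ~~ inimg psip (mI psip x), mI psip x <> x & mI psip (mI psip x) = x].
Proof.
move=> nx; have vx := val_mIp nx; move: (nx); rewrite inimg_psip => nx'.
have [n1 n2 n3] := H2 nx'.
have ny : ~~ inimg psip (mI psip x) by rewrite inimg_psip vx.
split => //.
- by move/(congr1 val); rewrite vx.
- by apply: val_inj; rewrite val_mIp // vx.
Qed.

Lemma psip_conn (H3 : forall v w, connect (AdjP psi) v w) v w :
  connect (AdjP psip) v w.
Proof.
rewrite -(projV_val v) -(projV_val w).
apply: (connect_homo (e := AdjP psi)) => // x y /existsP [c /and3P [nc /eqP ex /eqP ey]].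
case: (boolP ((c != a) && (c != b))) => h.
  apply: connect1; apply/existsP; exists ((@exist _ (fun x => (x != a) && (x != b)) c h : Fp)).
  have nx : ~~ inimg psip ((@exist _ (fun x => (x != a) && (x != b)) c h : Fp)) by rewrite inimg_psip.
  by rewrite nx /= ex eqxx /= val_mIp //= ey.
move: h; rewrite negb_and !negbK; case/orP => /eqP ec; subst c x y.
  by rewrite projV_ab connect0.
by rewrite bb projV_ab connect0.
Qed.

Lemma card_Fp : #|gF Yp| < #|gF Y|.
Proof.
rewrite /= card_sig (cardD1 a (gF Y)) inE add1n ltnS.
by apply: subset_leq_card; apply/subsetP => x; rewrite !inE => /andP [->].
Qed.

End Contr.

Lemma decomp_base S Y (psi : gmor Y (star S)) (v0 : gV Y) :
  is_agg Y -> injective (mF psi) -> (forall a, inimg psi a) ->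
  (forall v w, connect (AdjP psi) v w) -> gclosure ctd_gen psi.
Proof.
move=> Hagg inj all conn; apply: gcl_gen; split => //; left.
have veq : forall v w : gV Y, v = w.
  move=> v w; case/connectP: (conn v w) => [[|z p]] /=; first by move=> _ ->.
  by case/andP => /existsP [c]; rewrite all.
split.
- split.
  + by move=> w; exists v0; apply: unit_eq.
  + exact: inj.
  + by move=> c; apply: unit_eq.
  + by move=> c /=; rewrite Hagg.
  + by move=> c; rewrite all.
- by exists (fun _ => v0) => [v|[]]; [apply: veq | apply: unit_eq].
exists (fun c => xchoose (existsP (all c))).
  by move=> s; apply: inj; apply/eqP; apply: (xchooseP (existsP (all (mF psi s)))).
by move=> c; apply/eqP; apply: (xchooseP (existsP (all c))).
Qed.

Lemma decomp n : forall S Y (psi : gmor Y (star S)),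
  #|gF Y| <= n -> is_agg Y -> injective (mF psi) ->
  (forall x, ~~ inimg psi x ->
     [/\ ~~ inimg psi (mI psi x), mI psi x <> x & mI psi (mI psi x) = x]) ->
  (forall v w, connect (AdjP psi) v w) -> gV Y -> gclosure ctd_gen psi.
Proof.
elim: n => [|n IH] S Y psi hc Hagg inj H2 conn v0.
  case: (pickP [pred a | ~~ inimg psi a]) => [a _|all].
    by move: hc; rewrite (cardD1 a) inE.
  apply: (decomp_base v0) => // a; move: (all a) => /= /negbFE //.
case: (pickP [pred a | ~~ inimg psi a]) => [a /= na|all]; last first.
  apply: (decomp_base v0) => // a; move: (all a) => /= /negbFE //.
apply: (gcl_ext _ (fc_geq H2 na)).
apply: gcl_step.
  split => //; right; exists a, (mI psi a), (mrg psi a).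
  exact: fc_contr.
apply: IH.
- by rewrite -ltnS; apply: leq_trans (@card_Fp S Y psi a) hc.
- by [].
- exact: psip_inj inj H2 na.
- exact: psip_H2.
- exact: psip_conn.
- exact: projV psi a v0.
Qed.

Definition preim G H (f : gmor G H) a (h : inimg f a) : gF H := xchoose (existsP h).
Lemma preimP G H (f : gmor G H) a (h : inimg f a) : mF f (preim h) = a.
Proof. apply/eqP; exact: (xchooseP (existsP h)). Qed.

Lemma phi_props S (c : comma_ob S) : is_gmor (cphi c) /\ FC (cphi c).
Proof. exact: closure_inv (cphi_ctd c). Qed.

Lemma phi_gmor S (c : comma_ob S) : is_gmor (cphi c).
Proof. by case: (phi_props c). Qed.

Lemma phi_inj S (c : comma_ob S) : injective (mF (cphi c)).
Proof. by case: (phi_gmor c). Qed.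

Arguments phi_props {S} c.
Arguments phi_gmor {S} c.
Arguments phi_inj {S} c.

Section FObj.
Variables (S : finType) (c : comma_ob S).
Local Notation X := (cX c).
Local Notation phi := (cphi c).

Definition NN := {a : gF X | ~~ inimg phi a}.
Definition mkN a (h : ~~ inimg phi a) : NN := @exist _ (fun a => ~~ inimg phi a) a h.

Definition toX (x : S + NN) : gF X :=
  match x with inl s => mF phi s | inr n => val n end.

Definition fromX (a : gF X) : S + NN :=
  match Sumbool.sumbool_of_bool (inimg phi a) with
  | left h => inl (preim h)
  | right h => inr (mkN (negbT h))
  end.

Lemma fromX_in s : fromX (mF phi s) = inl s.
Proof.
rewrite /fromX; case: Sumbool.sumbool_of_bool => h.
  by congr inl; apply: (phi_inj c); rewrite preimP.
by exfalso; move: h; rewrite inimg_mF.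
Qed.

Lemma fromX_out (n : NN) : fromX (val n) = inr n.
Proof.
rewrite /fromX; case: Sumbool.sumbool_of_bool => h.
  by move: (valP n); rewrite h.
by congr inr; apply: val_inj.
Qed.

Lemma toX_fromX a : toX (fromX a) = a.
Proof.
case: (boolP (inimg phi a)) => [/inimgP [s <-]|h]; first by rewrite fromX_in.
by rewrite (fromX_out (mkN h)).
Qed.

Lemma fromX_toX x : fromX (toX x) = x.
Proof. by case: x => [s|n] /=; [rewrite fromX_in | rewrite fromX_out]. Qed.

Lemma toX_inj : injective toX.
Proof. by move=> x y e; rewrite -(fromX_toX x) e fromX_toX. Qed.

Lemma fromX_inj : injective fromX.
Proof. by move=> x y e; rewrite -(toX_fromX x) e toX_fromX. Qed.

Definition pairP (a : gF X) : gF X := if inimg phi a then a else mI phi a.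

Lemma pairP_inv a : pairP (pairP a) = a.
Proof.
rewrite /pairP; case: (boolP (inimg phi a)) => [h|na]; first by rewrite h.
have [n1 _ n3] := (match phi_gmor c with And5 _ _ _ _ h => h end) a na.
by rewrite (negbTE n1) n3.
Qed.

Lemma pairP_neq a : ~~ inimg phi a -> pairP a <> a.
Proof.
move=> na; rewrite /pairP (negbTE na).
by have [_ n2 _ _ _] := (match phi_gmor c with And5 _ _ _ _ h => h end) a na.
Qed.

Definition Frinv (x : S + NN) : S + NN :=
  match x with inl s => inl s | inr n => fromX (mI phi (val n)) end.

Lemma toX_Frinv x : toX (Frinv x) = pairP (toX x).
Proof.
case: x => [s|n] /=; rewrite /pairP.
  by rewrite inimg_mF.
by rewrite toX_fromX (negbTE (valP n)).
Qed.

Lemma Frinv_fromX a : Frinv (fromX a) = fromX (pairP a).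
Proof. by apply: toX_inj; rewrite toX_Frinv !toX_fromX. Qed.

Definition Fdata : rdata S :=
  @RData S NN (gV X) (fun x => gbd X (toX x)) Frinv
    (fun x => fromX (co c (toX x))).

Lemma Fdata_valid : ri_valid Fdata.
Proof.
have [sphi _ _ _ _] := phi_gmor c.
have [oinj obd oorb] := co_cyc c.
split.
- by move=> x; apply: toX_inj; rewrite /= !toX_Frinv pairP_inv.
- split.
  + by move=> x y /= /fromX_inj /oinj /toX_inj.
  + by move=> x /=; rewrite toX_fromX obd.
  move=> x y /= /oorb [n e]; exists n.
  suff -> : forall m, iter m (fun z => fromX (co c (toX z))) x =
                      fromX (iter m (co c) (toX x)) by rewrite e fromX_toX.
  elim=> [|m IH] /=; first by rewrite fromX_toX.
  by rewrite IH toX_fromX.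
- split.
    have [v _] := sphi tt; by apply/card_gt0P; exists v.
  move=> v w; have [_ fc] := phi_props c.
  have := fc v w (unit_eq _ _); apply: connect_sub => x y /existsP [a /and3P [na /eqP ex /eqP ey]].
  apply: connect1; apply/existsP; exists (inr (mkN na)) => /=.
  rewrite ex toX_fromX ey !eqxx !andbT.
  apply/eqP => /(congr1 toX); rewrite /= toX_fromX.
  by have [_ n2 _ _ _] := (match phi_gmor c with And5 _ _ _ _ h => h end) a na.
move=> x; split => [|[s ->] //].
case: x => [s|n] /=; first by exists s.
move/(congr1 toX); rewrite toX_fromX /= => e.
by have [_ n2 _ _ _] := (match phi_gmor c with And5 _ _ _ _ h => h end) _ (valP n).
Qed.

End FObj.

Definition aggOf (G : graph) : graph := @Graph (gF G) (gV G) (gbd G) (fun a => a).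
Definition agm G H (f : gmor G H) : gmor (aggOf G) (aggOf H) :=
  @GMor (aggOf G) (aggOf H) (mV f) (mF f) (mI f).

Section GObj.
Variables (S : finType) (r : ri_ob S).
Local Notation rr := (sval r).

Definition Gphi : gmor (aggOf (rgraph rr)) (star S) :=
  @GMor (aggOf (rgraph rr)) (star S) (fun _ => tt) inl (rinv rr).

Lemma inimg_Gphi x : inimg Gphi x = (if x is inl _ then true else false).
Proof.
case: x => [s|e]; first by apply/inimgP; exists s.
by apply/inimgP => -[s].
Qed.

Lemma rinv_inv x : rinv rr (rinv rr x) = x.
Proof. by case: (svalP r) => h _ _ _; apply: h. Qed.

Lemma rinv_inl s : rinv rr (inl s) = inl s.
Proof. by case: (svalP r) => _ _ _ h; apply/h; exists s. Qed.

Lemma rinv_inr e : rinv rr (inr e) <> inr e.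
Proof. by case: (svalP r) => _ _ _ h /h [s]. Qed.

Lemma rinv_inr' e : exists e', rinv rr (inr e) = inr e'.
Proof.
case E: (rinv rr (inr e)) => [s|e']; last by exists e'.
by move: (rinv_inv (inr e)); rewrite E rinv_inl.
Qed.

Lemma Gphi_closure : gclosure ctd_gen Gphi.
Proof.
case: (svalP r) => _ cyc [cpos conn] _.
case/card_gt0P: cpos => v0 _.
apply: (@decomp #|gF (aggOf (rgraph rr))|) => //.
- by move=> x y [].
- move=> x; rewrite inimg_Gphi; case: x => [//|e] _ /=.
  have [e' E] := rinv_inr' e; rewrite E inimg_Gphi; split => //.
    by rewrite -E; apply: rinv_inr.
  by rewrite -E rinv_inv.
- move=> v w; apply: connect_sub (conn v w) => x y /existsP [a /and3P [na ex ey]].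
  apply: connect1; apply/existsP; exists a; rewrite ex ey !andbT.
  case: a na {ex ey} => [s|e]; first by rewrite /= rinv_inl eqxx.
  by rewrite inimg_Gphi.
Qed.

Lemma Gcyc : @is_cycord (aggOf (rgraph rr)) (rsig rr).
Proof. by case: (svalP r). Qed.

Definition Gob : comma_ob S :=
  @CommaOb S (aggOf (rgraph rr)) (rsig rr) Gphi (fun _ => erefl) Gcyc Gphi_closure.

End GObj.

Definition withPair (Y : graph) (p : gF Y -> gF Y) : graph :=
  @Graph (gF Y) (gV Y) (gbd Y) p.
Definition rib Y Y' (p : gF Y -> gF Y) (p' : gF Y' -> gF Y') (f : gmor Y Y') :
  gmor (withPair p) (withPair p') :=
  @GMor (withPair p) (withPair p') (mV f) (mF f) (mI f).

Definition comp_pair Y Y' (f : gmor Y Y') (p' : gF Y' -> gF Y') (a : gF Y) : gF Y :=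
  if [pick b | mF f b == a] is Some b then mF f (p' b) else mI f a.

Lemma comp_pair_in Y Y' (f : gmor Y Y') p' b :
  injective (mF f) -> comp_pair f p' (mF f b) = mF f (p' b).
Proof.
move=> inj; rewrite /comp_pair; case: pickP => [b' /eqP /inj -> //|H].
by move: (H b); rewrite eqxx.
Qed.

Lemma comp_pair_out Y Y' (f : gmor Y Y') p' a :
  ~~ inimg f a -> comp_pair f p' a = mI f a.
Proof.
move=> na; rewrite /comp_pair; case: pickP => [b /eqP e|//].
by move: na; rewrite -e inimg_mF.
Qed.

Lemma comp_pair_inv Y Y' (f : gmor Y Y') p' :
  is_gmor f -> (forall x, p' (p' x) = x) -> forall a, comp_pair f p' (comp_pair f p' a) = a.
Proof.
case=> _ inj _ _ nif pinv a.
case: (boolP (inimg f a)) => [/inimgP [b <-]|na].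
  by rewrite !comp_pair_in // pinv.
have [n1 _ n3 _ _] := nif a na.
by rewrite !comp_pair_out.
Qed.

Lemma comp_pair_comp Y1 Y2 Y3 (f : gmor Y1 Y2) (h : gmor Y2 Y3) p' :
  injective (mF f) -> injective (mF h) ->
  forall a, comp_pair (gcomp f h) p' a = comp_pair f (comp_pair h p') a.
Proof.
move=> inf inh; have infh : injective (mF (gcomp f h)) by move=> x y /inf /inh.
move=> a; case: (boolP (inimg f a)) => [/inimgP [b <-]|na].
  rewrite comp_pair_in //.
  case: (boolP (inimg h b)) => [/inimgP [c <-]|nb].
    rewrite comp_pair_in //.
    exact: (comp_pair_in (f := gcomp f h)).
  rewrite (comp_pair_out (f := h)) // comp_pair_out; first exact: gcomp_mI_in.
  apply: contra nb => /inimgP [c /= /inf <-]; exact: inimg_mF.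
rewrite (comp_pair_out (f := f)) // comp_pair_out; first exact: gcomp_mI_out.
apply: contra na => /inimgP [c <-]; exact: inimg_mF.
Qed.

Lemma comp_pair_geq Y Y' (g g' : gmor Y Y') p' :
  injective (mF g) -> geq g g' -> forall a, comp_pair g p' a = comp_pair g' p' a.
Proof.
move=> inj e; case: (e) => _ eF eI.
have inj' : injective (mF g') by move=> x y; rewrite -!eF => /inj.
move=> a; case: (boolP (inimg g a)) => [/inimgP [b <-]|na].
  by rewrite comp_pair_in // (eF b) comp_pair_in // eF.
by rewrite !comp_pair_out -?(inimg_geq a e) // eI.
Qed.

Lemma oclosure_gmor Gen (hG : forall G H (f : gmor G H) o o', Gen G H f o o' -> is_gmor f)
  G H (f : gmor G H) o o' : oclosure Gen f o o' -> is_gmor f.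
Proof.
elim=> {G H f o o'}.
- by move=> G H f o o' /hG.
- by move=> G1 G2 G3 f g o1 o2 o3 /hG hf _ hg; apply: gcomp_gmor.
- by move=> G H f f' o o' _ h e; apply: geq_gmor h.
Qed.

Lemma forest_gmor G H (f : gmor G H) o o' : forest_gen f o o' -> is_gmor f.
Proof. by case=> _ _ _ _ [[[]]|[s [t [[]]]]]. Qed.

Lemma ribbon_gmor G H (f : gmor G H) o o' : ribbon_gen f o o' -> is_gmor f.
Proof. by case=> _ _ _ _ [[[]]|[s [t [_ []]]]]. Qed.

Lemma rib_gmor Y Y' (f : gmor Y Y') p p' :
  is_gmor f -> (forall a, p a = comp_pair f p' a) -> is_gmor (rib p p' f).
Proof.
move=> gf hp; case: (gf) => sf inf incf _ nif; split => //.
- by move=> b /=; rewrite hp comp_pair_in.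
move=> a na; have [n1 n2 n3 _ n5] := nif a na; split => //.
by move=> _ /=; rewrite hp comp_pair_out.
Qed.

Lemma gen_ribbon Y Y' (f : gmor Y Y') o o' p p' :
  forest_gen f o o' -> (forall x, p' (p' x) = x) ->
  (forall a, p a = comp_pair f p' a) -> ribbon_gen (rib p p' f) o o'.
Proof.
move=> fg pinv hp; have gf := forest_gmor fg.
have rg := rib_gmor gf hp.
case: fg => _ _ co co' h; split => //.
- by move=> x /=; rewrite !hp; apply: comp_pair_inv.
case: h => [[[_ bv bf] tr]|[s [t [[_ st ii ms hm] tr]]]].
  by left.
right; exists s, t; split => //.
by rewrite /= hp comp_pair_out ?ii ?eqxx.
Qed.

Lemma rib_comp Y1 Y2 Y3 p p2 p' (f : gmor Y1 Y2) (h : gmor Y2 Y3) :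
  rib p p' (gcomp f h) = gcomp (rib p p2 f) (rib p2 p' h).
Proof. by []. Qed.

Lemma claimL Y Y' (g : gmor Y Y') o o' :
  oclosure forest_gen g o o' ->
  forall (p : gF Y -> gF Y) (p' : gF Y' -> gF Y') R (j : gmor (withPair p') R) oR,
  (forall x, p' (p' x) = x) ->
  (forall a, p a = comp_pair g p' a) ->
  ribbon_gen j o' oR ->
  oclosure ribbon_gen (gcomp (rib p p' g) j) o oR.
Proof.
elim=> {Y Y' g o o'}.
- move=> Y Y' f o o' fg p p' R j oR pinv hp jg.
  apply: ocl_step (ocl_gen jg); exact: gen_ribbon.
- move=> Y1 Y2 Y3 f h o1 o2 o3 fg hcl IH p p' R j oR pinv hp jg.
  have gf := forest_gmor fg; have gh := oclosure_gmor forest_gmor hcl.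
  have [_ injf _ _ _] := gf; have [_ injh _ _ _] := gh.
  have hinv := comp_pair_inv gh pinv.
  have hp2 : forall a, p a = comp_pair f (comp_pair h p') a.
    by move=> a; rewrite hp comp_pair_comp.
  have := ocl_step (gen_ribbon fg hinv hp2)
             (IH (comp_pair h p') p' R j oR pinv (fun a => erefl) jg).
  move=> H; apply: ocl_ext H _.
  rewrite (rib_comp p (comp_pair h p') p' f h).
  by apply: geq_sym; apply: gcomp_assoc.
- move=> Y Y' g g' o o' gcl IH e p p' R j oR pinv hp jg.
  have [_ injg _ _ _] := oclosure_gmor forest_gmor gcl.
  have hp' : forall a, p a = comp_pair g p' a.
    by move=> a; rewrite hp (comp_pair_geq p' injg e).
  apply: ocl_ext (IH p p' R j oR pinv hp' jg) _.
  by apply: geq_comp_l.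
Qed.

Section FMor.
Variables (S : finType) (a b : comma_ob S).

Definition Fm (psi : gmor (cX a) (cX b)) : gmor (rgraph (Fdata a)) (rgraph (Fdata b)) :=
  @GMor (rgraph (Fdata a)) (rgraph (Fdata b)) (mV psi)
    (fun y => fromX (mF psi (toX y))) (fun x => fromX (mI psi (toX x))).

Lemma Fdata_graph (c : comma_ob S) : is_graph (rgraph (Fdata c)).
Proof. by case: (Fdata_valid c). Qed.
Lemma Fdata_cyc (c : comma_ob S) : @is_cycord (rgraph (Fdata c)) (rsig (Fdata c)).
Proof. by case: (Fdata_valid c). Qed.

Definition isoB (c : comma_ob S) : gmor (withPair (@pairP S c)) (rgraph (Fdata c)) :=
  @GMor (withPair (@pairP S c)) (rgraph (Fdata c)) id (@toX S c) id.
Definition isoA (c : comma_ob S) : gmor (rgraph (Fdata c)) (withPair (@pairP S c)) :=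
  @GMor (rgraph (Fdata c)) (withPair (@pairP S c)) id (@fromX S c) id.

Lemma isoB_gen (c : comma_ob S) : ribbon_gen (isoB c) (co c) (rsig (Fdata c)).
Proof.
split.
- by move=> x /=; apply: pairP_inv.
- exact: Fdata_graph.
- exact: co_cyc.
- exact: Fdata_cyc.
left; split; last by move=> y /=; rewrite toX_fromX.
split.
- split.
  + by move=> w; exists w.
  + exact: toX_inj.
  + by [].
  + by move=> y /=; rewrite toX_Frinv.
  + by move=> x; rewrite (_ : inimg (isoB c) x) //; apply/inimgP; exists (fromX x); rewrite /= toX_fromX.
- by exists id.
- by exists (@fromX S c); [apply: fromX_toX | apply: toX_fromX].
Qed.

Lemma isoA_gen (c : comma_ob S) : ribbon_gen (isoA c) (rsig (Fdata c)) (co c).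
Proof.
split.
- exact: Fdata_graph.
- by move=> x /=; apply: pairP_inv.
- exact: Fdata_cyc.
- exact: co_cyc.
left; split; last by move=> y /=; rewrite toX_fromX.
split.
- split.
  + by move=> w; exists w.
  + exact: fromX_inj.
  + by move=> y /=; rewrite toX_fromX.
  + by move=> y /=; rewrite Frinv_fromX.
  + by move=> x; rewrite (_ : inimg (isoA c) x) //; apply/inimgP; exists (toX x); rewrite /= fromX_toX.
- by exists id.
- by exists (@toX S c); [apply: toX_fromX | apply: fromX_toX].
Qed.

Lemma pair_comp (psi : gmor (cX a) (cX b)) :
  is_gmor psi -> geq (gcomp psi (cphi b)) (cphi a) ->
  forall x, pairP x = comp_pair psi (@pairP S b) x.
Proof.
case=> _ inj _ _ _ e; case: (e) => _ eF eI.
have inja := phi_inj a.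
move=> x; case: (boolP (inimg psi x)) => [/inimgP [y <-]|nx].
  rewrite comp_pair_in //.
  case: (boolP (inimg (cphi b) y)) => [/inimgP [s <-]|ny].
    rewrite [pairP (mF _ s)]/pairP inimg_mF.
    have -> : mF psi (mF (cphi b) s) = mF (cphi a) s by apply: (eF s).
    by rewrite /pairP inimg_mF.
  have nc : ~~ inimg (gcomp psi (cphi b)) (mF psi y).
    by rewrite inimg_gcompP // negb_and inimg_mF /=; apply/existsP => -[z /andP [/eqP /inj -> ]]; apply/negP.
  rewrite /pairP -(inimg_geq _ e) (negbTE nc) (negbTE ny) -eI //.
  exact: gcomp_mI_in.
have nc : ~~ inimg (gcomp psi (cphi b)) x.
  by apply: contra nx => /inimgP [s <-]; apply: inimg_mF.
rewrite comp_pair_out // /pairP -(inimg_geq _ e) (negbTE nc) -eI //.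
exact: gcomp_mI_out.
Qed.

Lemma F_ishom (psi : gmor (cX a) (cX b)) :
  oclosure forest_gen psi (co a) (co b) -> geq (gcomp psi (cphi b)) (cphi a) ->
  oclosure ribbon_gen (Fm psi) (rsig (Fdata a)) (rsig (Fdata b)) /\
  forall s, mF (Fm psi) (inl s) = inl s.
Proof.
move=> cl e; have gp := oclosure_gmor forest_gmor cl.
split; last first.
  move=> s /=; case: (e) => _ eF _.
  have -> : mF psi (mF (cphi b) s) = mF (cphi a) s by apply: (eF s).
  exact: fromX_in.
have L := claimL cl (@pairP_inv S b) (pair_comp gp e) (isoB_gen b).
apply: ocl_ext (ocl_step (isoA_gen a) L) _.
case: (gp) => _ inj _ _ _.
split => // x nx.
have ex : x = mF (isoA a) (toX x) by rewrite /= fromX_toX.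
rewrite {1}ex gcomp_mI_in; last exact: fromX_inj.
rewrite gcomp_mI_out //.
apply: contra nx => /inimgP [y ey]; apply/inimgP; exists (fromX y).
by rewrite /= toX_fromX ey fromX_toX.
Qed.

End FMor.

Lemma agm_gmor G H (f : gmor G H) : is_gmor f -> is_gmor (agm f).
Proof.
case=> sf inf incf _ nif; split => // a na.
by have [n1 n2 n3 _ n5] := nif a na; split.
Qed.

Lemma agm_comp G1 G2 G3 (f : gmor G1 G2) (g : gmor G2 G3) :
  agm (gcomp f g) = gcomp (agm f) (agm g).
Proof. by []. Qed.

Lemma ribbon_forest G H (f : gmor G H) o o' :
  ribbon_gen f o o' -> forest_gen (agm f) o o'.
Proof.
case=> _ _ co co' h; split => //.
case: h => [[[gf bv bf] tr]|[s [t [_ [gf st ii ms hm] tr]]]].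
  by left; split => //; split => //; apply: agm_gmor.
by right; exists s, t; split => //; split => //; apply: agm_gmor.
Qed.

Lemma LG G H (g : gmor G H) o o' :
  oclosure ribbon_gen g o o' -> oclosure forest_gen (agm g) o o'.
Proof.
elim=> {G H g o o'}.
- by move=> G H f o o' /ribbon_forest h; apply: ocl_gen.
- move=> G1 G2 G3 f g o1 o2 o3 /ribbon_forest hf _ IH.
  rewrite agm_comp; exact: ocl_step hf IH.
- move=> G H f f' o o' _ IH e; apply: ocl_ext IH _.
  by case: e => e1 e2 e3; split.
Qed.

Lemma G_ishom S (r r' : ri_ob S) (psi : gmor (rgraph (sval r)) (rgraph (sval r'))) :
  oclosure ribbon_gen psi (rsig (sval r)) (rsig (sval r')) ->
  (forall s, mF psi (inl s) = inl s) ->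
  oclosure forest_gen (agm psi) (rsig (sval r)) (rsig (sval r')) /\
  geq (gcomp (agm psi) (Gphi r')) (Gphi r).
Proof.
move=> cl hfix; split; first exact: LG.
have [sp inj inc ed nip] := oclosure_gmor ribbon_gmor cl.
split => //.
move=> x nx.
case: (boolP (inimg psi x)) => [/inimgP [y ey]|nxp].
  by subst x; rewrite (gcomp_mI_in (f := agm psi)) //=; apply: ed.
rewrite (gcomp_mI_out (f := agm psi)) //=.
have [_ _ _ n4 _] := nip x nxp; apply: n4.
case: x nx nxp => [s|e] nx nxp; last exact: rinv_inr.
by move: nxp; rewrite -hfix inimg_mF.
Qed.

Section Final.
Variable S : finType.

Definition Fob (c : comma_ob S) : ri_ob S := exist _ (Fdata c) (Fdata_valid c).

Definition FF : functor (comma_cat S) (RI_cat S) :=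
  @Functor (comma_cat S) (RI_cat S) Fob (fun a b psi => @Fm S a b psi).

Definition GG : functor (RI_cat S) (comma_cat S) :=
  @Functor (RI_cat S) (comma_cat S) (@Gob S) (fun r r' psi => agm psi).

Lemma geq_id G (f : gmor G G) : (forall v, mV f v = v) -> (forall b, mF f b = b) -> geq f (gid G).
Proof.
move=> hv hb; split => // a na; exfalso; move/negP: na; apply; apply/inimgP.
by exists a.
Qed.

Lemma Fm_inj (a b : comma_ob S) (f : gmor (cX a) (cX b)) :
  injective (mF f) -> injective (mF (Fm f)).
Proof. by move=> inj x y /= /fromX_inj /inj /toX_inj. Qed.

Lemma FF_functor : is_functor FF.
Proof.
split.
- move=> a b f [cl e]; exact: F_ishom.
- move=> a b f g _ _ e; case: (e) => eV eF eI; split => //=.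
  + by move=> y; rewrite eF.
  move=> x nx; rewrite eI //; apply: contra nx => /inimgP [c ec]; apply/inimgP.
  by exists (fromX c); rewrite /= toX_fromX ec fromX_toX.
- by move=> a; split => //= x; rewrite fromX_toX.
move=> a b c f g [clf _] [clg _].
have [_ injf _ _ _] := oclosure_gmor forest_gmor clf.
have [_ injg _ _ _] := oclosure_gmor forest_gmor clg.
split; [by [] | by move=> y /=; rewrite toX_fromX | move=> x nx].
case: (boolP (inimg f (toX x))) => [/inimgP [y ey]|nfx].
  have ex : x = mF (Fm f) (fromX y) by rewrite /= toX_fromX ey fromX_toX.
  rewrite [in RHS]ex gcomp_mI_in; last exact: Fm_inj.
  have -> : mF (fm FF f) (mI (fm FF g) (fromX y)) =
            fromX (mF f (toX (fromX (mI g (toX (fromX y)))))) by [].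
  have -> : mI (fm FF (cmp f g)) x = fromX (mI (gcomp f g) (toX x)) by [].
  by rewrite !toX_fromX -ey gcomp_mI_in.
have nfx' : ~~ inimg (Fm f) x.
  apply: contra nfx => /inimgP [y <-]; by rewrite /= toX_fromX inimg_mF.
have -> : mI (cmp (fm FF f) (fm FF g)) x = mI (Fm f) x by apply: gcomp_mI_out.
have -> : mI (fm FF (cmp f g)) x = fromX (mI (gcomp f g) (toX x)) by [].
by rewrite gcomp_mI_out.
Qed.

Lemma GG_functor : is_functor GG.
Proof.
split.
- move=> r r' f [cl hfix]; exact: G_ishom.
- by move=> r r' f g _ _ [e1 e2 e3]; split.
- by move=> r; split.
- by move=> r r' r'' f g _ _; apply: geq_refl.
Qed.

End Final.

Section NatC.
Variable S : finType.

Definition etaC (c : comma_ob S) : arr (comma_cat S) c (fo (fcomp (FF S) (GG S)) c) :=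
  @GMor (cX c) (cX (Gob (Fob c))) (fun v => v) (@toX S c) (fun a => a).
Definition etiC (c : comma_ob S) : arr (comma_cat S) (fo (fcomp (FF S) (GG S)) c) c :=
  @GMor (cX (Gob (Fob c))) (cX c) (fun v => v) (@fromX S c) (fun a => a).

Lemma etaC_hom c : ishom (etaC c).
Proof.
split.
  apply: ocl_gen; split.
  - exact: cX_agg.
  - by [].
  - exact: co_cyc.
  - exact: Fdata_cyc.
  left; split; last by move=> y /=; rewrite toX_fromX.
  split; last first.
  - by exists (@fromX S c); [apply: fromX_toX | apply: toX_fromX].
  - by exists id.
  split => //.
  - by move=> w; exists w.
  - exact: toX_inj.
  - by move=> b /=; rewrite cX_agg.
  - move=> x; rewrite (_ : inimg (etaC c) x) //; apply/inimgP.
    by exists (fromX x); rewrite /= toX_fromX.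
split => //; first by move=> v; apply: unit_eq.
move=> x nx.
have ex : x = mF (etaC c) (fromX x) by rewrite /= toX_fromX.
rewrite {1}ex gcomp_mI_in; last exact: toX_inj.
have -> : mF (etaC c) (mI (cphi (Gob (Fob c))) (fromX x)) = toX (Frinv (fromX x)) by [].
rewrite toX_Frinv toX_fromX /pairP ifN //.
Qed.

Lemma etiC_hom c : ishom (etiC c).
Proof.
split.
  apply: ocl_gen; split.
  - by [].
  - exact: cX_agg.
  - exact: Fdata_cyc.
  - exact: co_cyc.
  left; split; last by move=> y /=; rewrite toX_fromX.
  split; last first.
  - by exists (@toX S c); [apply: toX_fromX | apply: fromX_toX].
  - by exists id.
  split => //.
  - by move=> w; exists w.
  - exact: fromX_inj.
  - by move=> b /=; rewrite toX_fromX.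
  - by move=> b /=; rewrite cX_agg.
  - move=> x; rewrite (_ : inimg (etiC c) x) //; apply/inimgP.
    by exists (toX x); rewrite /= fromX_toX.
split => //; first by move=> v; apply: unit_eq.
  by move=> s /=; rewrite fromX_in.
move=> x nx.
have ex : x = mF (etiC c) (toX x) by rewrite /= fromX_toX.
rewrite {1}ex gcomp_mI_in; last exact: fromX_inj.
case: x nx ex => [s|n] nx ex.
  by exfalso; move/negP: nx; apply; apply/inimgP; exists s; rewrite /= fromX_in.
by [].
Qed.

Lemma natisoC : natiso (fid (comma_cat S)) (fcomp (FF S) (GG S)).
Proof.
exists (fun c => etaC c), (fun c => etiC c); split.
- by move=> c; split; [apply: etaC_hom | apply: etiC_hom].
- move=> c; split; apply: geq_id => // b /=; [exact: toX_fromX | exact: fromX_toX].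
move=> a b f [cl e].
have [_ inj _ _ _] := oclosure_gmor forest_gmor cl.
split; [by [] | by move=> y /=; rewrite toX_fromX | move=> x nx].
have nfx : ~~ inimg f x.
  apply: contra nx => /inimgP [y <-]; apply/inimgP; exists (fromX y) => /=.
  by rewrite toX_fromX.
have -> : mI (cmp (fm (fid (comma_cat S)) f) (etaC b)) x = mI f x by apply: gcomp_mI_out.
have ex : x = mF (etaC a) (fromX x) by rewrite /= toX_fromX.
have -> : mI (cmp (etaC a) (fm (fcomp (FF S) (GG S)) f)) x =
          mI (gcomp (etaC a) (agm (Fm f))) (mF (etaC a) (fromX x)) by rewrite -ex.
rewrite gcomp_mI_in; last exact: toX_inj.
by rewrite /= !toX_fromX.
Qed.

End NatC.

Section NatR.
Variable S : finType.

Definition etaR (r : ri_ob S) : arr (RI_cat S) (fo (fcomp (GG S) (FF S)) r) r :=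
  @GMor (rgraph (Fdata (Gob r))) (rgraph (sval r)) (fun v => v) (@fromX S (Gob r)) (fun a => a).
Definition etiR (r : ri_ob S) : arr (RI_cat S) r (fo (fcomp (GG S) (FF S)) r) :=
  @GMor (rgraph (sval r)) (rgraph (Fdata (Gob r))) (fun v => v) (@toX S (Gob r)) (fun a => a).

Lemma pairP_G (r : ri_ob S) y : @pairP S (Gob r) y = rinv (sval r) y.
Proof.
rewrite /pairP inimg_Gphi; case: y => [s|e] //.
exact: esym (rinv_inl r s).
Qed.

Lemma ri_graph (r : ri_ob S) : is_graph (rgraph (sval r)).
Proof. by case: (svalP r). Qed.
Lemma ri_cyc (r : ri_ob S) : @is_cycord (rgraph (sval r)) (rsig (sval r)).
Proof. by case: (svalP r). Qed.

Lemma etaR_hom r : ishom (etaR r).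
Proof.
split; last by move=> s; exact: (fromX_in (Gob r) s).
apply: ocl_gen; split.
- exact: Fdata_graph.
- exact: ri_graph.
- exact: Fdata_cyc.
- exact: ri_cyc.
left; split; last by move=> y /=; rewrite toX_fromX.
split; last first.
- by exists (@toX S (Gob r)); [apply: toX_fromX | apply: fromX_toX].
- by exists id.
split => //.
- by move=> w; exists w.
- exact: fromX_inj.
- by move=> b /=; rewrite toX_fromX.
- by move=> b /=; rewrite Frinv_fromX pairP_G.
- move=> x; rewrite (_ : inimg (etaR r) x) //; apply/inimgP.
  by exists (toX x); rewrite /= fromX_toX.
Qed.

Lemma etiR_hom r : ishom (etiR r).
Proof.
split => //.
apply: ocl_gen; split.
- exact: ri_graph.
- exact: Fdata_graph.
- exact: ri_cyc.
- exact: Fdata_cyc.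
left; split; last by move=> y /=; rewrite toX_fromX.
split; last first.
- by exists (@fromX S (Gob r)); [apply: fromX_toX | apply: toX_fromX].
- by exists id.
split => //.
- by move=> w; exists w.
- exact: toX_inj.
- by move=> b /=; rewrite toX_Frinv pairP_G.
- move=> x; rewrite (_ : inimg (etiR r) x) //; apply/inimgP.
  by exists (@fromX S (Gob r) x); rewrite /= toX_fromX.
Qed.

Lemma natisoR : natiso (fcomp (GG S) (FF S)) (fid (RI_cat S)).
Proof.
exists (fun r => etaR r), (fun r => etiR r); split.
- by move=> r; split; [apply: etaR_hom | apply: etiR_hom].
- move=> r; split; apply: geq_id => // b /=; [exact: (@fromX_toX S (Gob r)) | exact: (@toX_fromX S (Gob r))].
move=> a b f [cl hfix].
split; [by [] | by move=> y /=; rewrite toX_fromX | move=> x nx].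
have nfx : ~~ inimg (fm (FF S) (fm (GG S) f)) x.
  apply: contra nx => /inimgP [y <-]; apply/inimgP; exists (toX y) => /=.
  by rewrite fromX_toX.
have -> : mI (cmp (fm (fcomp (GG S) (FF S)) f) (etaR b)) x =
          mI (fm (FF S) (fm (GG S) f)) x by apply: gcomp_mI_out.
have ex : x = mF (etaR a) (toX x) by rewrite /= fromX_toX.
have -> : mI (cmp (etaR a) (fm (fid (RI_cat S)) f)) x =
          mI (gcomp (etaR a) f) (mF (etaR a) (toX x)) by rewrite -ex.
rewrite gcomp_mI_in; last exact: fromX_inj.
by [].
Qed.

End NatR.

Theorem proposition5p8 (S : finType) : cat_equiv (comma_cat S) (RI_cat S).
Proof.
exists (FF S), (GG S); split.
- exact: FF_functor.
- exact: GG_functor.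
- exact: natisoC.
- exact: natisoR.
Qed.
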